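(* Let $m,n,t$ be positive integers, let $p\in\mathbb{R}[x_1,\dots,x_n]$ be a form of degree $t$, let $T_p\in\mathbb{R}^{n\times\cdots\times n}$ be its associated symmetric $t$-tensor, and let $A_1,\dots,A_n\in L(\mathbb{R}^m)$ be pairwise commuting contractions. Then $$\|p\|_{\mathrm{cb}}\ge\Big\|\sum_{i_1,\dots,i_t=1}^n(T_p)_{i_1,\dots,i_t}A_{i_1}\cdots A_{i_t}\Big\|.$$
   Context: A form is a homogeneous polynomial; for $p(x)=\sum_{|\alpha|=t}c_\alpha x^\alpha$, $(T_p)_{i_1,\dots,i_t}=c_{e_{i_1}+\dots+e_{i_t}}/\tau(i_1,\dots,i_t)$ where $\tau$ is the number of distinct permutations of $(i_1,\dots,i_t)$. For a $t$-tensor $T$, $\|T\|_{\mathrm{cb}}=\sup\|\sum_{i_1,\dots,i_t}T_{i_1,\dots,i_t}U_1(i_1)\cdots U_t(i_t)\|$ over all $k$ and $k\times k$ unitaries $U_j(i)$; equivalently (by the Russo–Dye theorem) over all $k\times k$ contractions. With $(T\circ\sigma)_{i_1,\dots,i_t}=T_{i_{\sigma(1)},\dots,i_{\sigma(t)}}$, $\|p\|_{\mathrm{cb}}=\inf\{\sum_{\sigma\in S_t}\|T^\sigma\|_{\mathrm{cb}}:T_p=\sum_{\sigma\in S_t}T^\sigma\circ\sigma\}$. A contraction is a linear map of operator norm at most $1$; $\|\cdot\|$ is the operator norm. *)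

(* Defs.v *)
From HB Require Import structures.
From mathcomp Require Import all_boot all_order all_algebra all_fingroup.
From mathcomp Require Import classical_sets reals.
From mathcomp Require Import complex.
From mathcomp Require Import mpoly.

Set Implicit Arguments.
Unset Strict Implicit.
Unset Printing Implicit Defensive.

Import Order.TTheory GRing.Theory Num.Theory.
Local Open Scope ring_scope.
Local Open Scope classical_set_scope.

Section Defs.
Variable R : realType.

Definition normv (m : nat) (v : 'cV[R]_m) : R :=
  Num.sqrt (\sum_(l < m) (v l 0) ^+ 2).

Definition opnorm (m : nat) (A : 'M[R]_m) : R :=
  sup [set r | exists v : 'cV[R]_m, normv v <= 1 /\ r = normv (A *m v)].

Definition normvC (k : nat) (v : 'cV[R[i]]_k) : R :=
  Num.sqrt (\sum_(l < k) (complex.Re (v l 0) ^+ 2 + complex.Im (v l 0) ^+ 2)).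

Definition opnormC (k : nat) (M : 'M[R[i]]_k) : R :=
  sup [set r | exists v : 'cV[R[i]]_k, normvC v <= 1 /\ r = normvC (M *m v)].

Definition unitary (k : nat) (U : 'M[R[i]]_k) : Prop :=
  (map_mx (@conjc R) U)^T *m U = 1%:M.

Definition tensor (n t : nat) := {ffun 'I_t -> 'I_n} -> R.

Definition cbnormT (n t : nat) (T : tensor n t) : R :=
  sup [set r | exists (k : nat) (U : 'I_t -> 'I_n -> 'M[R[i]]_k),
         (0 < k)%N /\ (forall j l, unitary (U j l)) /\
         r = opnormC (\sum_(idx : {ffun 'I_t -> 'I_n})
                        (Complex (T idx) 0) *: \big[mulmx/1%:M]_(j < t) U j (idx j))].

Definition tcomp (n t : nat) (T : tensor n t) (s : {perm 'I_t}) : tensor n t :=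
  fun idx => T [ffun j => idx (s j)].

Definition mono_of (n t : nat) (idx : {ffun 'I_t -> 'I_n}) : 'X_{1..n} :=
  \big[@mnm_add n/@mnm0 n]_(j < t) mnm1 (idx j).

Definition tau (n t : nat) (idx : {ffun 'I_t -> 'I_n}) : nat :=
  #|[set [ffun j => idx (s j)] | s : {perm 'I_t}]|.

Definition Tp (n t : nat) (p : {mpoly R[n]}) : tensor n t :=
  fun idx => p@_(mono_of idx) / (tau idx)%:R.

Definition cbnorm (n t : nat) (p : {mpoly R[n]}) : R :=
  inf [set r | exists S : {perm 'I_t} -> tensor n t,
         (forall idx, @Tp n t p idx = \sum_(s : {perm 'I_t}) tcomp (S s) s idx) /\
         r = \sum_(s : {perm 'I_t}) cbnormT (S s)].

End Defs.
Arguments Tp {R n} t p idx.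
Arguments cbnorm {R n} t p.

(* Main.v *)
Require Import Defs.
From HB Require Import structures.
From mathcomp Require Import all_boot all_order all_algebra all_fingroup.
From mathcomp Require Import classical_sets reals.
From mathcomp Require Import complex.
From mathcomp Require Import mpoly.
From mathcomp Require Import ring lra.
Import Order.TTheory GRing.Theory Num.Theory.
Local Open Scope ring_scope.
Set Implicit Arguments. Unset Strict Implicit. Unset Printing Implicit Defensive.

Section P1.
Variable R : realType.

Lemma CS (I : finType) (f g : I -> R) :
  (\sum_i f i * g i) ^+ 2 <= (\sum_i f i ^+ 2) * (\sum_i g i ^+ 2).
Proof.
set a := \sum_i f i ^+ 2; set b := \sum_i g i ^+ 2; set c := \sum_i f i * g i.
have a0 : 0 <= a by apply: sumr_ge0 => i _; exact: sqr_ge0.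
have b0 : 0 <= b by apply: sumr_ge0 => i _; exact: sqr_ge0.
have [bz|bnz] := eqVneq b 0.
  have g0 : forall i, g i = 0.
    move=> i; apply/eqP; rewrite -sqrf_eq0; apply/eqP.
    by apply: (psumr_eq0P _ bz) => // j _; exact: sqr_ge0.
  have -> : c = 0 by rewrite /c big1 // => i _; rewrite g0 mulr0.
  by rewrite expr0n /= mulr_ge0.
have bp : 0 < b by rewrite lt_def bnz b0.
have E : \sum_i (b * f i - c * g i) ^+ 2 = b * (a * b - c ^+ 2).
  have -> : b * (a * b - c ^+ 2) =
    \sum_i (b ^+ 2 * f i ^+ 2 - (b * c *+ 2) * (f i * g i) + c ^+ 2 * g i ^+ 2).
    rewrite big_split sumrB /= -!mulr_sumr /a /b /c -/b -/c; ring.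
  by apply: eq_bigr => i _; ring.
have : 0 <= b * (a * b - c ^+ 2).
  by rewrite -E; apply: sumr_ge0 => i _; exact: sqr_ge0.
rewrite pmulr_rge0 // subr_ge0.
by rewrite mulrC.
Qed.

Lemma minkowski (I : finType) (f g : I -> R) :
  Num.sqrt (\sum_i (f i + g i) ^+ 2) <=
  Num.sqrt (\sum_i f i ^+ 2) + Num.sqrt (\sum_i g i ^+ 2).
Proof.
set a := \sum_i f i ^+ 2; set b := \sum_i g i ^+ 2; set c := \sum_i f i * g i.
have a0 : 0 <= a by apply: sumr_ge0 => i _; exact: sqr_ge0.
have b0 : 0 <= b by apply: sumr_ge0 => i _; exact: sqr_ge0.
have -> : \sum_i (f i + g i) ^+ 2 = a + c *+ 2 + b.
  rewrite /a /b /c -sumrMnl -!big_split /=.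
  by apply: eq_bigr => i _; ring.
have s0 : 0 <= Num.sqrt a + Num.sqrt b by rewrite addr_ge0 ?sqrtr_ge0.
rewrite -(ger0_norm s0) -sqrtr_sqr ler_sqrt ?sqr_ge0 //.
have hc : c <= Num.sqrt a * Num.sqrt b.
  apply: (le_trans (ler_norm c)).
  rewrite -sqrtr_sqr -sqrtrM // ler_sqrt ?mulr_ge0 //; exact: CS.
have : (Num.sqrt a + Num.sqrt b) ^+ 2 = a + Num.sqrt a * Num.sqrt b *+ 2 + b.
  by rewrite sqrrD !sqr_sqrtr.
move=> ->; rewrite lerD2r lerD2l; by rewrite lerMn2r /= hc.
Qed.
Local Notation C := R[i].
Local Notation Re := (@complex.Re R).
Local Notation Im := (@complex.Im R).
Local Notation RC x := (@Complex R x 0).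

Lemma ReD (x y : C) : Re (x + y) = Re x + Re y. Proof. by case: x; case: y. Qed.
Lemma ImD (x y : C) : Im (x + y) = Im x + Im y. Proof. by case: x; case: y. Qed.
Lemma Re0 : Re 0 = 0. Proof. by []. Qed.
Lemma Im0 : Im 0 = 0. Proof. by []. Qed.
Lemma Re_sum (I : Type) (r : seq I) (P : pred I) (F : I -> C) :
  Re (\sum_(i <- r | P i) F i) = \sum_(i <- r | P i) Re (F i).
Proof. exact: (big_morph _ ReD Re0). Qed.
Lemma Im_sum (I : Type) (r : seq I) (P : pred I) (F : I -> C) :
  Im (\sum_(i <- r | P i) F i) = \sum_(i <- r | P i) Im (F i).
Proof. exact: (big_morph _ ImD Im0). Qed.
Lemma ReM (x y : C) : Re (x * y) = Re x * Re y - Im x * Im y.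
Proof. by case: x; case: y. Qed.
Lemma ImM (x y : C) : Im (x * y) = Re x * Im y + Im x * Re y.
Proof. by case: x => a b; case: y => c d /=; ring. Qed.
Lemma ReRC (a : R) : Re (RC a) = a. Proof. by []. Qed.

Definition nc2 k (v : 'cV[C]_k) := \sum_(l < k) (Re (v l 0) ^+ 2 + Im (v l 0) ^+ 2).
Definition cf k (v : 'cV[C]_k) (p : 'I_k * bool) : R :=
  if p.2 then Re (v p.1 0) else Im (v p.1 0).

Lemma nc2_ge0 k (v : 'cV[C]_k) : 0 <= nc2 v.
Proof. by apply: sumr_ge0 => l _; rewrite addr_ge0 ?sqr_ge0. Qed.

Lemma normvCE k (v : 'cV[C]_k) : normvC v = Num.sqrt (nc2 v).
Proof. by []. Qed.

Lemma normvC_ge0 k (v : 'cV[C]_k) : 0 <= normvC v.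
Proof. exact: sqrtr_ge0. Qed.

Lemma nc2_cf k (v : 'cV[C]_k) : nc2 v = \sum_p cf v p ^+ 2.
Proof.
rewrite /nc2 -(pair_big xpredT xpredT (fun l b => cf v (l, b) ^+ 2)) /=.
by apply: eq_bigr => l _; rewrite big_bool /= addrC.
Qed.

Lemma normvCD k (v w : 'cV[C]_k) : normvC (v + w) <= normvC v + normvC w.
Proof.
rewrite !normvCE !nc2_cf.
have -> : \sum_p cf (v + w) p ^+ 2 = \sum_p (cf v p + cf w p) ^+ 2.
  apply: eq_bigr => [[l b]] _; rewrite /cf /= !mxE.
  by case: b; rewrite ?ReD ?ImD.
exact: minkowski.
Qed.

Lemma normvC_sum k (I : finType) (F : I -> 'cV[C]_k) :
  normvC (\sum_i F i) <= \sum_i normvC (F i).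
Proof.
elim/big_rec2: _ => [|i y1 y2 _ IH].
  rewrite normvCE /nc2 big1 ?sqrtr0 // => l _.
  by rewrite mxE /= expr0n addr0.
apply: (le_trans (normvCD _ _)); by rewrite lerD2l.
Qed.

Definition cabs (c : C) := Num.sqrt (Re c ^+ 2 + Im c ^+ 2).

Lemma normvCZ k (c : C) (v : 'cV[C]_k) : normvC (c *: v) = cabs c * normvC v.
Proof.
rewrite !normvCE /cabs -sqrtrM ?addr_ge0 ?sqr_ge0 //; congr Num.sqrt.
rewrite /nc2 mulr_sumr; apply: eq_bigr => l _; rewrite mxE ReM ImM; ring.
Qed.

Lemma cabs_RC (a : R) : cabs (RC a) = `|a|.
Proof. by rewrite /cabs /= expr0n addr0 sqrtr_sqr. Qed.

Lemma cabs_le k (v : 'cV[C]_k) l : cabs (v l 0) <= normvC v.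
Proof.
rewrite /cabs normvCE ler_sqrt ?nc2_ge0 // /nc2 (bigD1 l) //= lerDl.
by apply: sumr_ge0 => j _; rewrite addr_ge0 ?sqr_ge0.
Qed.


Lemma cplx_eq (x y : C) : Re x = Re y -> Im x = Im y -> x = y.
Proof. by case: x => a b; case: y => c d /= -> ->. Qed.

Lemma nc2_col m1 m2 (x : 'cV[C]_m1) (y : 'cV[C]_m2) :
  nc2 (col_mx x y) = nc2 x + nc2 y.
Proof.
by rewrite /nc2 big_split_ord /=; congr (_ + _); apply: eq_bigr => l _;
  rewrite ?col_mxEu ?col_mxEd.
Qed.

Lemma nc2_dot k (v : 'cV[C]_k) :
  ((map_mx conjc v)^T *m v) 0 0 = RC (nc2 v).
Proof.
rewrite mxE; apply: cplx_eq.
  rewrite Re_sum /nc2 /=; apply: eq_bigr => l _; rewrite !mxE.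
  by case: (v l 0) => a b /=; ring.
rewrite Im_sum /= big1 // => l _; rewrite !mxE.
by case: (v l 0) => a b /=; ring.
Qed.

Lemma map_conj_mul m1 m2 m3 (X : 'M[C]_(m1, m2)) (Y : 'M[C]_(m2, m3)) :
  map_mx conjc (X *m Y) = map_mx conjc X *m map_mx conjc Y.
Proof. exact: map_mxM. Qed.

Lemma unitary_nc2 k (U : 'M[C]_k) (v : 'cV[C]_k) :
  unitary U -> nc2 (U *m v) = nc2 v.
Proof.
move=> hU.
have : RC (nc2 (U *m v)) = RC (nc2 v).
  rewrite -!nc2_dot map_conj_mul trmx_mul mulmxA -(mulmxA _ _ U).
  by rewrite hU mulmx1.
by case.
Qed.

Lemma unitary1 k : unitary (1%:M : 'M[C]_k).
Proof.
rewrite /unitary (_ : map_mx conjc 1%:M = 1%:M) ?trmx1 ?mulmx1 //.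
apply/matrixP => i j; rewrite !mxE; case: (i == j) => /=.
  by apply: cplx_eq => //=; rewrite oppr0.
by apply: cplx_eq => //=; rewrite oppr0.
Qed.

Lemma unitary_mul k (X Y : 'M[C]_k) : unitary X -> unitary Y -> unitary (X *m Y).
Proof.
rewrite /unitary => hX hY; rewrite map_conj_mul trmx_mul mulmxA.
by rewrite -(mulmxA _ _ X) hX mulmx1 hY.
Qed.

Lemma unitary_big k t (F : 'I_t -> 'M[C]_k) :
  (forall j, unitary (F j)) -> unitary (\big[mulmx/1%:M]_(j < t) F j).
Proof.
move=> hF; elim/big_rec: _ => [|j y _ IH]; first exact: unitary1.
exact: unitary_mul.
Qed.

Lemma normvC0 k : normvC (0 : 'cV[C]_k) = 0.
Proof.
rewrite normvCE /nc2 big1 ?sqrtr0 // => l _.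
by rewrite mxE /= expr0n addr0.
Qed.

Lemma mulmx_col_sum k (M : 'M[C]_k) (v : 'cV[C]_k) :
  M *m v = \sum_l v l 0 *: col l M.
Proof.
apply/matrixP => i j; rewrite (ord1 j) !mxE summxE; apply: eq_bigr => l _.
by rewrite !mxE mulrC.
Qed.

Lemma cabs_ge0 c : 0 <= cabs c. Proof. exact: sqrtr_ge0. Qed.

Lemma opnormC_bnd k (M : 'M[C]_k) : exists B,
  forall v, normvC v <= 1 -> normvC (M *m v) <= B.
Proof.
exists (\sum_l normvC (col l M)) => v hv.
rewrite mulmx_col_sum; apply: (le_trans (normvC_sum _)); apply: ler_sum => l _.
rewrite normvCZ; apply: ler_piMl; first exact: normvC_ge0.
exact: le_trans (cabs_le _ _) hv.
Qed.

Lemma opnormC_ub k (M : 'M[C]_k) v : normvC v <= 1 -> normvC (M *m v) <= opnormC M.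
Proof.
move=> hv; apply: sup_upper_bound; last by exists v.
split; first by exists (normvC (M *m v)); exists v.
have [B hB] := opnormC_bnd M.
by exists B => r [w [hw ->]]; apply: hB.
Qed.

Lemma opnormC_le k (M : 'M[C]_k) B :
  (forall v, normvC v <= 1 -> normvC (M *m v) <= B) -> opnormC M <= B.
Proof.
move=> hB; apply: ge_sup; last by move=> r [w [hw ->]]; apply: hB.
exists (normvC (M *m 0)); exists 0; by split => //; rewrite normvC0 ler01.
Qed.

Definition RCm k (a : 'cV[R]_k) : 'cV[C]_k := map_mx (fun x => RC x) a.
Definition RCM k (M : 'M[R]_k) : 'M[C]_k := map_mx (fun x => RC x) M.

Lemma normv_RC k (a : 'cV[R]_k) : normv a = normvC (RCm a).
Proof.
rewrite /normv normvCE /nc2; congr Num.sqrt; apply: eq_bigr => l _.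
by rewrite !mxE /= expr0n addr0.
Qed.

Lemma RCm_mul k (M : 'M[R]_k) (a : 'cV[R]_k) : RCm (M *m a) = RCM M *m RCm a.
Proof.
apply/matrixP => i j; rewrite !mxE; apply: cplx_eq.
  by rewrite Re_sum /=; apply: eq_bigr => l _; rewrite !mxE /=; ring.
by rewrite Im_sum /= big1 // => l _; rewrite !mxE /=; ring.
Qed.

Lemma opnorm_ub k (M : 'M[R]_k) a : normv a <= 1 -> normv (M *m a) <= opnorm M.
Proof.
move=> ha; apply: sup_upper_bound; last by exists a.
split; first by exists (normv (M *m a)); exists a.
have [B hB] := opnormC_bnd (RCM M).
exists B => r [w [hw ->]]; rewrite normv_RC RCm_mul; apply: hB.
by rewrite -normv_RC.
Qed.

Lemma normv0 k : normv (0 : 'cV[R]_k) = 0.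
Proof. by rewrite normv_RC (_ : RCm 0 = 0) ?normvC0 //; apply/matrixP => i j; rewrite !mxE. Qed.

Lemma opnorm_le k (M : 'M[R]_k) B :
  (forall a, normv a <= 1 -> normv (M *m a) <= B) -> opnorm M <= B.
Proof.
move=> hB; apply: ge_sup; last by move=> r [w [hw ->]]; apply: hB.
exists (normv (M *m 0)); exists 0; by split => //; rewrite normv0 ler01.
Qed.

Definition Xop k n t (T : tensor R n t) (U : 'I_t -> 'I_n -> 'M[C]_k) : 'M[C]_k :=
  \sum_(idx : {ffun 'I_t -> 'I_n}) (RC (T idx)) *: \big[mulmx/1%:M]_(j < t) U j (idx j).

Lemma cb_bnd n t (T : tensor R n t) : exists B, forall k (U : 'I_t -> 'I_n -> 'M[C]_k),
  (forall j l, unitary (U j l)) -> opnormC (Xop T U) <= B.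
Proof.
exists (\sum_(idx : {ffun 'I_t -> 'I_n}) `|T idx|) => k U hU.
apply: opnormC_le => v hv.
rewrite /Xop mulmx_suml; apply: (le_trans (normvC_sum _)); apply: ler_sum => idx _.
rewrite -scalemxAl normvCZ cabs_RC; apply: ler_piMr => //.
by rewrite normvCE unitary_nc2 //; apply: unitary_big.
Qed.

Lemma cbnormT_ub n t (T : tensor R n t) k (U : 'I_t -> 'I_n -> 'M[C]_k) :
  (0 < k)%N -> (forall j l, unitary (U j l)) -> opnormC (Xop T U) <= cbnormT T.
Proof.
move=> hk hU; apply: sup_upper_bound; last by exists k, U.
split; first by exists (opnormC (Xop T U)), k, U.
have [B hB] := cb_bnd T.
by exists B => r [k' [U' [_ [hU' ->]]]]; apply: hB.
Qed.

Definition sq k (a : 'cV[R]_k) := \sum_l a l 0 ^+ 2.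
Lemma sq_ge0 k (a : 'cV[R]_k) : 0 <= sq a.
Proof. by apply: sumr_ge0 => l _; exact: sqr_ge0. Qed.
Lemma normvE k (a : 'cV[R]_k) : normv a = Num.sqrt (sq a). Proof. by []. Qed.

Lemma sqZ k (r : R) (a : 'cV[R]_k) : sq (r *: a) = r ^+ 2 * sq a.
Proof. by rewrite /sq mulr_sumr; apply: eq_bigr => l _; rewrite mxE exprMn. Qed.

Lemma sq_eq0 k (a : 'cV[R]_k) : sq a = 0 -> a = 0.
Proof.
move=> h; apply/matrixP => i j; rewrite (ord1 j) mxE.
apply/eqP; rewrite -sqrf_eq0; apply/eqP.
by apply: (psumr_eq0P _ h) => // l _; exact: sqr_ge0.
Qed.

Lemma normvZ k (r : R) (a : 'cV[R]_k) : normv (r *: a) = `|r| * normv a.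
Proof. by rewrite !normvE sqZ sqrtrM ?sqr_ge0 // sqrtr_sqr. Qed.

Lemma contr_of k (M : 'M[R]_k) : opnorm M <= 1 ->
  forall a, sq (M *m a) <= sq a.
Proof.
move=> hM a.
have [s0|s0] := eqVneq (sq a) 0.
  by rewrite (sq_eq0 s0) mulmx0 /sq big1 // => l _; rewrite mxE expr0n.
have sp : 0 < sq a by rewrite lt_def s0 sq_ge0.
have spos : 0 < normv a by rewrite normvE sqrtr_gt0.
have h1 : normv ((normv a)^-1 *: a) <= 1.
  by rewrite normvZ ger0_norm ?invr_ge0 ?(ltW spos) // mulVf ?gt_eqF.
have := le_trans (opnorm_ub M h1) hM.
rewrite -scalemxAr normvZ ger0_norm ?invr_ge0 ?(ltW spos) //.
rewrite ler_pdivrMl // mulr1 !normvE => h2.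
by rewrite -(ler_sqrt _ (sq_ge0 _)).
Qed.

Lemma contr_tr k (M : 'M[R]_k) : (forall a, sq (M *m a) <= sq a) ->
  forall a, sq (M^T *m a) <= sq a.
Proof.
move=> hM a; set b := M^T *m a.
have E : sq b = \sum_i a i 0 * (M *m b) i 0.
  rewrite /sq.
  transitivity (\sum_l \sum_i b l 0 * (M i l * a i 0)).
    by apply: eq_bigr => l _; rewrite expr2 {2}/b mxE mulr_sumr; apply: eq_bigr => i _; rewrite mxE.
  rewrite exchange_big /=; apply: eq_bigr => i _; rewrite mxE mulr_sumr.
  by apply: eq_bigr => l _; rewrite mulrCA mulrA mulrC.
have hcs := CS (fun i => a i 0) (fun i => (M *m b) i 0).
rewrite -E -/(sq a) -/(sq (M *m b)) in hcs.
have h3 : sq b ^+ 2 <= sq a * sq b.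
  by apply: (le_trans hcs); apply: ler_wpM2l; [exact: sq_ge0 | exact: hM].
have [z|nz] := eqVneq (sq b) 0; first by rewrite z sq_ge0.
have bp : 0 < sq b by rewrite lt_def nz sq_ge0.
by move: h3; rewrite expr2 ler_pM2r.
Qed.

Definition ReV k (v : 'cV[C]_k) : 'cV[R]_k := map_mx Re v.
Definition ImV k (v : 'cV[C]_k) : 'cV[R]_k := map_mx Im v.

Lemma nc2_split k (v : 'cV[C]_k) : nc2 v = sq (ReV v) + sq (ImV v).
Proof. by rewrite /nc2 /sq -big_split; apply: eq_bigr => l _; rewrite !mxE. Qed.

Lemma ReV_mul k (M : 'M[R]_k) v : ReV (RCM M *m v) = M *m ReV v.
Proof.
apply/matrixP => i j; rewrite !mxE Re_sum; apply: eq_bigr => l _.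
by rewrite !mxE ReM /= mul0r subr0.
Qed.
Lemma ImV_mul k (M : 'M[R]_k) v : ImV (RCM M *m v) = M *m ImV v.
Proof.
apply/matrixP => i j; rewrite !mxE Im_sum; apply: eq_bigr => l _.
by rewrite !mxE ImM /= mul0r addr0.
Qed.

Lemma contrC k (M : 'M[R]_k) : (forall a, sq (M *m a) <= sq a) ->
  forall v, nc2 (RCM M *m v) <= nc2 v.
Proof.
by move=> hM v; rewrite !nc2_split ReV_mul ImV_mul lerD.
Qed.

Lemma sq_col m1 m2 (x : 'cV[R]_m1) (y : 'cV[R]_m2) : sq (col_mx x y) = sq x + sq y.
Proof.
by rewrite /sq big_split_ord /=; congr (_ + _); apply: eq_bigr => l _;
  rewrite ?col_mxEu ?col_mxEd.
Qed.

Lemma nc2Z k (c : C) (v : 'cV[C]_k) : nc2 (c *: v) = (Re c ^+ 2 + Im c ^+ 2) * nc2 v.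
Proof. by rewrite /nc2 mulr_sumr; apply: eq_bigr => l _; rewrite mxE ReM ImM; ring. Qed.

Section Dil.
Variable k : nat.
Variable A : 'M[R]_k.
Hypothesis hA : forall a, sq (A *m a) <= sq a.
Hypothesis hAt : forall a, sq (A^T *m a) <= sq a.

Definition Hm : 'M[C]_(k + k) := block_mx 0 (RCM A) (RCM A^T) 0.

Lemma Hm_contr v : nc2 (Hm *m v) <= nc2 v.
Proof.
rewrite -(vsubmxK v) /Hm mul_block_col !mul0mx add0r addr0 !nc2_col addrC.
by apply: lerD; apply: contrC.
Qed.

Local Open Scope sesquilinear_scope.

Lemma Hm_herm : Hm \is hermsymmx.
Proof.
apply/is_hermitianmxP; rewrite expr0 scale1r.
apply/matrixP => i j; rewrite [RHS]mxE [in RHS]mxE.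
rewrite -(splitK i) -(splitK j); case: (split i) => i0; case: (split j) => j0 /=;
  rewrite /Hm ?block_mxEul ?block_mxEur ?block_mxEdl ?block_mxEdr !mxE;
  by apply: cplx_eq => //=; rewrite oppr0.
Qed.


Definition Pm := spectralmx Hm.
Definition dg := spectral_diag Hm.
Definition Qm := invmx Pm.

Lemma Pu : Pm \is unitarymx. Proof. exact: spectral_unitarymx. Qed.
Lemma Punit : Pm \in unitmx. Proof. exact: spectral_unit. Qed.
Lemma HmE : Hm = Qm *m diag_mx dg *m Pm.
Proof. by have /orthomx_spectralP := hermitian_normalmx Hm_herm. Qed.
Lemma Qt : Qm = Pm^t*.
Proof. by rewrite /Qm invmx_unitary // Pu. Qed.

Lemma d_real l : dg 0 l = RC (Re (dg 0 l)).
Proof.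
have := mxOverP (hermitian_spectral_diag_real Hm_herm) 0 l.
by move=> /RRe_real.
Qed.

Lemma eig_bound l : Re (dg 0 l) ^+ 2 <= 1.
Proof.
set u := col l Qm.
have HQ : Hm *m Qm = Qm *m diag_mx dg.
  by rewrite HmE -!mulmxA /Qm mulmxV ?Punit // mulmx1.
have Hu : Hm *m u = dg 0 l *: u.
  apply/matrixP => i j; rewrite (ord1 j).
  move: HQ; rewrite mul_mx_diag => /matrixP /(_ i l); rewrite !mxE => h.
  rewrite -[RHS]mulrC -h; apply: eq_bigr => x _; rewrite !mxE //.
have nu : nc2 u = 1.
  have : RC (nc2 u) = 1.
    rewrite -nc2_dot mxE.
    have := unitarymxP Pu => /matrixP /(_ l l); rewrite !mxE eqxx => h.
    rewrite [RHS](_ : 1 = true%:R) // -h.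
    apply: eq_bigr => x _; rewrite !mxE Qt !mxE.
    by case: (Pm l x) => a b /=; rewrite opprK.
  by case.
have := Hm_contr u; rewrite Hu nc2Z nu mulr1.
have -> : Im (dg 0 l) = 0 by rewrite d_real.
by rewrite expr0n /= addr0.
Qed.


Definition rr l := Re (dg 0 l).
Definition ss l := Num.sqrt (1 - rr l ^+ 2).
Definition ee (b : bool) : 'rV[C]_(k + k) :=
  \row_l Complex (rr l) (if b then ss l else - ss l).
Definition Wm b := Qm *m diag_mx (ee b) *m Pm.
Definition Jm : 'M[C]_(k + k) := block_mx 0 1%:M 1%:M 0.
Definition Vm b := Jm *m Wm b.

Lemma e_unit b l : ee b 0 l * (ee b 0 l)^* = 1.
Proof.
have h : ss l ^+ 2 = 1 - rr l ^+ 2.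
  by rewrite sqr_sqrtr // subr_ge0; exact: eig_bound.
have h' : ss l * ss l = 1 - rr l * rr l by rewrite -!expr2.
rewrite mxE; apply: cplx_eq; rewrite ?ReM ?ImM /=; case: b => /=.
- move: h'; set a := rr l; set c := ss l; nra.
- move: h'; set a := rr l; set c := ss l; nra.
- by ring.
- by rewrite !opprK; ring.
Qed.

Lemma diag_unitary b : diag_mx (ee b) \is unitarymx.
Proof.
apply/unitarymxP; apply/matrixP => i j; rewrite mul_diag_mx !mxE.
case: (eqVneq i j) => [<-|ne].
  by have := e_unit b i; rewrite mxE /= => h; rewrite /= !mulr1n h.
by rewrite /= !mulr0n conjC0 mulr0.
Qed.

Lemma Qu : Qm \is unitarymx.
Proof. by rewrite Qt trmxC_unitary Pu. Qed.

Lemma W_unitary b : Wm b \is unitarymx.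
Proof. by rewrite /Wm !mul_unitarymx ?Qu ?diag_unitary ?Pu. Qed.

Lemma J_unitary : Jm \is unitarymx.
Proof.
apply/unitarymxP; rewrite /Jm tr_block_mx !trmx0 trmx1 map_block_mx map_mx0 map_mx1.
rewrite mulmx_block !mul0mx !mulmx0 !mul1mx !addr0 !add0r.
by rewrite [RHS](scalar_mx_block k k).
Qed.

Lemma V_unitary b : Vm b \is unitarymx.
Proof. by rewrite /Vm mul_unitarymx ?J_unitary ?W_unitary. Qed.

Lemma JH : Jm *m Hm = block_mx (RCM A^T) 0 0 (RCM A).
Proof.
by rewrite /Jm /Hm mulmx_block !mul0mx !mul1mx !addr0 !add0r.
Qed.

Lemma V_sum : block_mx (RCM A^T) 0 0 (RCM A) = \sum_b (2^-1 : C) *: Vm b.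
Proof.
rewrite big_bool /=.
have hV : forall b, (2^-1 : C) *: Vm b = Jm *m (2^-1 *: Wm b).
  by move=> b; rewrite /Vm scalemxAr.
rewrite !hV -mulmxDr -scalerDr -JH; congr (_ *m _).
have hd : diag_mx (ee true) + diag_mx (ee false) = diag_mx dg + diag_mx dg.
  apply/matrixP => i j; rewrite !mxE.
  case: (eqVneq i j) => [->|ne] /=; last by rewrite !mulr0n addr0.
  rewrite !mulr1n d_real; apply: cplx_eq; rewrite ?ReD ?ImD /= ?subrr ?addr0 //.
have h2 : (2^-1 + 2^-1 : C) = 1.
  by rewrite -mulr2n -[_ *+ 2]mulr_natr mulVf // pnatr_eq0.
rewrite /Wm -mulmxDl -mulmxDr hd mulmxDr mulmxDl -HmE scalerDr -scalerDl h2.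
by rewrite scale1r.
Qed.

End Dil.

Lemma unitary_of k (U : 'M[C]_k) : U \is unitarymx -> unitary U.
Proof.
move=> /unitarymxP h; rewrite /unitary map_trmx; exact: mulmx1C h.
Qed.

Lemma RCM_mul k (M N : 'M[R]_k) : RCM (M *m N) = RCM M *m RCM N.
Proof.
apply/matrixP => i j; rewrite !mxE; apply: cplx_eq.
  by rewrite Re_sum /=; apply: eq_bigr => l _; rewrite !mxE /=; ring.
by rewrite Im_sum /= big1 // => l _; rewrite !mxE /=; ring.
Qed.
Lemma RCM1 k : RCM (1%:M : 'M[R]_k) = 1%:M.
Proof. by apply/matrixP => i j; rewrite !mxE; case: (i == j). Qed.
Lemma RCM_add k (M N : 'M[R]_k) : RCM (M + N) = RCM M + RCM N.
Proof. by apply/matrixP => i j; rewrite !mxE; apply: cplx_eq => //=; rewrite addr0. Qed.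
Lemma RCM0 k : RCM (0 : 'M[R]_k) = 0.
Proof. by apply/matrixP => i j; rewrite !mxE. Qed.
Lemma RCM_scale k r (M : 'M[R]_k) : RCM (r *: M) = RC r *: RCM M.
Proof. by apply/matrixP => i j; rewrite !mxE; apply: cplx_eq => //=; ring. Qed.

Lemma bigmulE k (I : Type) (r : seq I) (F : I -> 'M[C]_k) :
  \big[mulmx/1%:M]_(j <- r) F j = \big[*%R/1]_(j <- r) F j.
Proof. by elim: r => [|x r IH]; rewrite ?big_nil ?big_cons ?IH. Qed.

Lemma big_scale_prod k (I : Type) (r : seq I) (c : C) (F : I -> 'M[C]_k) :
  \big[mulmx/1%:M]_(j <- r) (c *: F j) = c ^+ size r *: \big[mulmx/1%:M]_(j <- r) F j.
Proof.
elim: r => [|x r IH]; first by rewrite !big_nil expr0 scale1r.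
by rewrite !big_cons IH -scalemxAl -scalemxAr scalerA -exprS.
Qed.

Lemma big_block k t (P Q : 'I_t -> 'M[C]_k) :
  \big[mulmx/1%:M]_(j < t) block_mx (P j) 0 0 (Q j) =
  block_mx (\big[mulmx/1%:M]_(j < t) P j) 0 0 (\big[mulmx/1%:M]_(j < t) Q j).
Proof.
elim/big_rec3: _ => [|i y1 y2 y3 _ ->]; first by rewrite -scalar_mx_block.
by rewrite mulmx_block !mulmx0 !mul0mx !addr0 !add0r.
Qed.

Lemma half_RC : (2^-1 : C) = RC (2^-1).
Proof.
rewrite -[RC _]/(((2^-1 : R)%:C)%C) rmorphV ?unitfE ?pnatr_eq0 //.
by rewrite rmorph_nat.
Qed.

Lemma nc2_0 k : nc2 (0 : 'cV[C]_k) = 0.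
Proof. by rewrite /nc2 big1 // => l _; rewrite mxE /= expr0n addr0. Qed.

Section Key.
Variables (m n t : nat) (A : 'I_n -> 'M[R]_m).
Hypothesis hm : (0 < m)%N.
Hypothesis hA : forall l a, sq (A l *m a) <= sq a.
Hypothesis hAt : forall l a, sq ((A l)^T *m a) <= sq a.

Definition Mt (T : tensor R n t) : 'M[R]_m :=
  \sum_(idx : {ffun 'I_t -> 'I_n}) T idx *: \big[mulmx/1%:M]_(j < t) A (idx j).

Lemma key T y : normvC y <= 1 -> normvC (RCM (Mt T) *m y) <= cbnormT T.
Proof.
move=> hy.
pose D l := block_mx (RCM (A l)^T) 0 0 (RCM (A l)).
pose V l b := Vm (A l) b.
have hD l : D l = \sum_b (2^-1 : C) *: V l b by exact: V_sum.
pose Z := \sum_(idx : {ffun 'I_t -> 'I_n}) RC (T idx) *: \big[mulmx/1%:M]_(j < t) D (idx j).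
have colsum (I : finType) (F : I -> 'cV[C]_m) :
    col_mx (0 : 'cV[C]_m) (\sum_i F i) = \sum_i col_mx 0 (F i).
  apply: (big_morph (fun v => col_mx (0 : 'cV[C]_m) v)).
    by move=> a b; rewrite add_col_mx addr0.
  by rewrite col_mx0.
have RCMsum : RCM (Mt T) = \sum_(idx : {ffun 'I_t -> 'I_n})
     RC (T idx) *: \big[mulmx/1%:M]_(j < t) RCM (A (idx j)).
  rewrite /Mt (big_morph _ (@RCM_add m) (@RCM0 m)); apply: eq_bigr => idx _.
  by rewrite RCM_scale (big_morph _ (@RCM_mul m) (@RCM1 m)).
have hZ1 : Z *m col_mx 0 y = col_mx 0 (RCM (Mt T) *m y).
  rewrite /Z RCMsum !mulmx_suml colsum; apply: eq_bigr => idx _.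
  rewrite -!scalemxAl big_block mul_block_col mulmx0 !mul0mx !add0r.
  by rewrite scale_col_mx scaler0.
have hP (idx : {ffun 'I_t -> 'I_n}) : \big[mulmx/1%:M]_(j < t) D (idx j) =
    (2^-1 : C) ^+ t *: \sum_(e : {ffun 'I_t -> bool})
        \big[mulmx/1%:M]_(j < t) V (idx j) (e j).
  rewrite (eq_bigr (fun j => \sum_b (2^-1 : C) *: V (idx j) b)); last by move=> j _; rewrite hD.
  rewrite bigmulE bigA_distr_bigA scaler_sumr; apply: eq_bigr => e _.
  rewrite -bigmulE big_scale_prod.
  by have -> : size (index_enum (ordinal t)) = t by rewrite /index_enum -enumT size_enum_ord.
have hZ2 : Z = (2^-1 : C) ^+ t *: \sum_(e : {ffun 'I_t -> bool}) Xop T (fun j l => V l (e j)).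
  rewrite /Z /Xop exchange_big scaler_sumr; apply: eq_bigr => idx _.
  by rewrite hP scalerA mulrC -scalerA scaler_sumr.
have e1 : normvC (RCM (Mt T) *m y) = normvC (Z *m col_mx 0 y).
  by rewrite hZ1 !normvCE nc2_col nc2_0 add0r.
have hw : normvC (col_mx (0 : 'cV[C]_m) y) <= 1.
  by rewrite normvCE nc2_col nc2_0 add0r.
have hc : (2^-1 : C) ^+ t = RC ((2^-1 : R) ^+ t).
  by rewrite half_RC -[RC _]/(((2^-1 : R)%:C)%C) -rmorphXn.
have hk : (0 < m + m)%N by rewrite addn_gt0 hm.
rewrite e1 hZ2 -scalemxAl normvCZ hc cabs_RC mulmx_suml.
apply: le_trans (ler_wpM2l (normr_ge0 _) (normvC_sum _)) _.
have hb : \sum_(e : {ffun 'I_t -> bool})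
    normvC (Xop T (fun j l => V l (e j)) *m col_mx 0 y) <=
    \sum_(e : {ffun 'I_t -> bool}) cbnormT T.
  apply: ler_sum => e _; apply: le_trans (opnormC_ub _ hw) _.
  apply: cbnormT_ub => // j l; apply: unitary_of; exact: V_unitary.
apply: le_trans (ler_wpM2l (normr_ge0 _) hb) _.
rewrite sumr_const card_ffun card_bool card_ord -[cbnormT T *+ _]mulr_natl natrX.
rewrite ger0_norm ?exprn_ge0 ?invr_ge0 ?ler0n // mulrA -exprMn mulVf ?pnatr_eq0 //.
by rewrite expr1n mul1r.
Qed.
End Key.

Lemma comm_big k (I : Type) (r : seq I) (F : I -> 'M[R]_k) (X : 'M[R]_k) :
  (forall j, X *m F j = F j *m X) ->
  X *m \big[mulmx/1%:M]_(j <- r) F j = \big[mulmx/1%:M]_(j <- r) F j *m X.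
Proof.
move=> h; elim/big_rec: _ => [|i y _ IH]; first by rewrite mulmx1 mul1mx.
by rewrite mulmxA h -mulmxA IH mulmxA.
Qed.

Lemma bigmx_cat k (I : Type) (r1 r2 : seq I) (F : I -> 'M[R]_k) :
  \big[mulmx/1%:M]_(i <- r1 ++ r2) F i =
  \big[mulmx/1%:M]_(i <- r1) F i *m \big[mulmx/1%:M]_(i <- r2) F i.
Proof.
elim: r1 => [|x r1 IH]; first by rewrite big_nil mul1mx.
by rewrite cat_cons !big_cons IH mulmxA.
Qed.

Lemma perm_prod_comm k (I : eqType) (r1 r2 : seq I) (F : I -> 'M[R]_k) :
  (forall i j, F i *m F j = F j *m F i) -> perm_eq r1 r2 ->
  \big[mulmx/1%:M]_(i <- r1) F i = \big[mulmx/1%:M]_(i <- r2) F i.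
Proof.
move=> hF; elim: r1 r2 => [|x r1 IH] r2 hp.
  by move/perm_size: hp => /esym /size0nil ->.
have : x \in r2 by rewrite -(perm_mem hp) mem_head.
move=> hx; case/splitPr: hx hp => p1 p2 hp.
have hp' : perm_eq r1 (p1 ++ p2).
  rewrite -(perm_cons x); apply: (perm_trans hp).
  by rewrite -cat1s perm_catCA.
rewrite big_cons (IH _ hp') !bigmx_cat big_cons /=.
rewrite [LHS]mulmxA [RHS]mulmxA (@comm_big _ _ p1 F (F x)) // => j; exact: hF.
Qed.

Lemma prod_perm_ord k t (s : {perm 'I_t}) (F : 'I_t -> 'M[R]_k) :
  (forall i j, F i *m F j = F j *m F i) ->
  \big[mulmx/1%:M]_(j < t) F (s j) = \big[mulmx/1%:M]_(j < t) F j.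
Proof.
move=> hF; rewrite -(big_map s xpredT F); apply: perm_prod_comm => //.
apply: uniq_perm; first by rewrite map_inj_uniq ?index_enum_uniq //; exact: perm_inj.
  exact: index_enum_uniq.
move=> x; rewrite mem_index_enum; apply/mapP; exists ((s^-1)%g x).
  by rewrite mem_index_enum.
by rewrite permKV.
Qed.
End P1.

Theorem proposition4p4 (R : realType) (m n t : nat)
  (hm : (0 < m)%N) (hn : (0 < n)%N) (ht : (0 < t)%N)
  (p : {mpoly R[n]}) (hp : p \is t.-homog)
  (A : 'I_n -> 'M[R]_m)
  (hA : forall l, opnorm (A l) <= 1)
  (hcomm : forall l l', A l *m A l' = A l' *m A l) :
  opnorm (\sum_(idx : {ffun 'I_t -> 'I_n})
            Tp t p idx *: \big[mulmx/1%:M]_(j < t) A (idx j))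
  <= cbnorm t p.
Proof.
have hAs l a : sq (A l *m a) <= sq a := contr_of (hA l) a.
have hAts l a : sq ((A l)^T *m a) <= sq a := contr_tr (hAs l) a.
apply: lb_le_inf.
  pose S0 := fun s : {perm 'I_t} =>
    if s == 1%g then Tp t p else (fun _ : {ffun 'I_t -> 'I_n} => 0 : R).
  exists (\sum_s cbnormT (S0 s)), S0; split => // idx.
  rewrite (bigD1 1%g) //= big1 ?addr0.
    rewrite /tcomp /S0 eqxx; congr (Tp t p _).
    by apply/ffunP => j; rewrite ffunE perm1.
  by move=> s /negbTE hs; rewrite /tcomp /S0 hs.
move=> r [S [hS ->]].
apply: opnorm_le => a ha.
have hL : (\sum_(idx : {ffun 'I_t -> 'I_n})
            Tp t p idx *: \big[mulmx/1%:M]_(j < t) A (idx j)) = \sum_s Mt A (S s).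
  rewrite (eq_bigr (fun idx => (\sum_s tcomp (S s) s idx) *:
      \big[mulmx/1%:M]_(j < t) A (idx j))); last by move=> idx _; rewrite hS.
  rewrite /Mt; under eq_bigr do rewrite scaler_suml.
  rewrite exchange_big; apply: eq_bigr => s _.
  rewrite (reindex (fun idx' : {ffun 'I_t -> 'I_n} => [ffun j => idx' ((s^-1)%g j)])) /=; last first.
    exists (fun idx => [ffun j => idx (s j)]) => idx _; apply/ffunP => j;
      by rewrite !ffunE ?permK ?permKV.
  apply: eq_bigr => idx _; rewrite /tcomp; congr (_ *: _).
    by congr (S s _); apply/ffunP => j; rewrite !ffunE permK.
  rewrite (eq_bigr (fun j => A (idx ((s^-1)%g j)))); last by move=> j _; rewrite ffunE.
  rewrite (prod_perm_ord (F := fun j => A (idx j)) (s^-1)%g) // => i j; exact: hcomm.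
rewrite hL normv_RC RCm_mul (big_morph _ (@RCM_add _ m) (@RCM0 _ m)) mulmx_suml.
apply: le_trans (normvC_sum _) _; apply: ler_sum => s _.
by apply: key => //; rewrite -normv_RC.
Qed.
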